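(* Let $a,b$ be positive integers with $\gcd(a,b)=1$ such that $H_1=\langle a,b\rangle$ is minimally generated by two elements. Let $c\in H_1$ with $c>0$, $c\notin\{a,b\}$, and let $d\in\mathbb{N}$ with $d>1$ and $\gcd(c,d)=1$. Let $H=\langle da,db,c\rangle$ (the gluing of $H_1$ and $\mathbb{N}$ with respect to $d$ and $c$), $k$ a field, and $R=k[H]$. Then $R$ is Gorenstein and $$\#\mathcal{X}_{R}=d(ab-a-b)+(d-1)c+1,$$ where $\mathcal{X}_R$ is the set of graded ideals $I$ of $R$ with $R/I$ Gorenstein and $\mu_R(I)\ge 2$.
   Context: $R=k[H]=k[t^h\mid h\in H]\subseteq k[t]$ graded by $\deg t=1$; graded ideals are homogeneous ideals for this grading; $\mu_R(I)$ is the minimal number of generators. *)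

(* Defs.v *)
From HB Require Import structures.
From mathcomp Require Import all_boot all_order all_algebra.
From mathcomp Require Import boolp classical_sets cardinality.
Set Implicit Arguments. Unset Strict Implicit. Unset Printing Implicit Defensive.
Import Order.TTheory GRing.Theory.
Local Open Scope ring_scope.
Local Open Scope classical_set_scope.

Definition sg2 (a b : nat) : set nat :=
  [set n | exists x y : nat, n = (x * a + y * b)%N].
Definition sg3 (a b c : nat) : set nat :=
  [set n | exists x y z : nat, n = (x * a + y * b + z * c)%N].

(* <a,b> is minimally generated by the two elements a, b: neither generator
   lies in the submonoid generated by the other. *)
Definition min_gen2 (a b : nat) : Prop :=
  ~ (exists x : nat, a = (x * b)%N) /\ ~ (exists x : nat, b = (x * a)%N).

Section SemigroupRing.
Variables (k : fieldType) (H : set nat).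

(* R = k[H] = k[t^h | h in H] inside k[t] = {poly k}  (t = 'X, deg t = 1). *)
Definition inR (p : {poly k}) : Prop := forall i : nat, p`_i != 0 -> H i.

Definition inM (p : {poly k}) : Prop := inR p /\ p`_0 = 0.

Definition graded_ideal (I : set {poly k}) : Prop :=
  [/\ (forall p, I p -> inR p),
      I 0,
      (forall p q, I p -> I q -> I (p + q)),
      (forall r p, inR r -> I p -> I (r * p)) &
      (forall p, I p -> forall i : nat, I (p`_i *: 'X^i))].

Definition generated_by (I : set {poly k}) (s : seq {poly k}) : Prop :=
  forall p, I p <-> exists r : 'I_(size s) -> {poly k},
      (forall j, inR (r j)) /\ p = \sum_(j < size s) r j * s`_j.

Definition mu_is (I : set {poly k}) (n : nat) : Prop :=
  (exists s, size s = n /\ generated_by I s) /\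
  (forall s, generated_by I s -> (n <= size s)%N).

Definition zero_ideal (I : set {poly k}) : Prop := forall p, I p -> p = 0.

(* The socle (I :_R R_+)/I of R/I is one-dimensional over k. *)
Definition socle_simple (I : set {poly k}) : Prop :=
  exists s, [/\ inR s, ~ I s, (forall m, inM m -> I (s * m)) &
    forall q, inR q -> (forall m, inM m -> I (q * m)) ->
      exists (l : k) (i : {poly k}), I i /\ q = l *: s + i].

Definition principal (x : {poly k}) : set {poly k} :=
  [set p | exists r, inR r /\ p = r * x].

(* R/I is Gorenstein, for a graded ideal I of R:
   - if I <> 0, R/I is a graded Artinian local ring, Gorenstein iff its
     socle is one-dimensional;
   - if I = 0, R/I = R is a one-dimensional graded CM domain, Gorenstein iff
     R/xR is Gorenstein for a (any) nonzero homogeneous x in R_+. *)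
Definition gorenstein_quot (I : set {poly k}) : Prop :=
  (zero_ideal I /\ exists (h : nat), (0 < h)%N /\ H h /\
       socle_simple (principal 'X^h))
  \/ (~ zero_ideal I /\ socle_simple I).

Definition XR : set (set {poly k}) :=
  [set I | graded_ideal I /\ gorenstein_quot I /\
           exists n, mu_is I n /\ (2 <= n)%N].

End SemigroupRing.

(* Main.v *)
From Stdlib Require Import ZArith Lia.
Require Import Defs.
From HB Require Import structures.
From mathcomp Require Import all_boot all_order all_algebra.
From mathcomp Require Import boolp classical_sets cardinality.
From mathcomp Require Import zify.
Local Open Scope classical_set_scope.
Local Open Scope card_scope.

Import Order.TTheory GRing.Theory.

Section Arith.
Local Open Scope Z_scope.

Definition H1Z (a b u : Z) := exists x y : Z, 0<=x /\ 0<=y /\ u = x*a + y*b.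
Definition HZ (a b c d z : Z) := exists u w, H1Z a b u /\ 0 <= w /\ z = d*u + c*w.

Lemma H1Z_nonneg a b u : 0<=a -> 0<=b -> H1Z a b u -> 0 <= u.
Proof. move=> ha hb [x [y [hx [hy ->]]]]; nia. Qed.

Lemma H1Z_add a b u v : H1Z a b u -> H1Z a b v -> H1Z a b (u+v).
Proof.
move=> [x [y [hx [hy ->]]]] [x' [y' [hx' [hy' ->]]]].
exists (x+x'), (y+y'); split; [lia|split; [lia|ring]].
Qed.

Lemma H1Z_mul a b u t : H1Z a b u -> 0 <= t -> H1Z a b (u*t).
Proof.
move=> [x [y [hx [hy ->]]]] ht.
exists (x*t), (y*t); split; [nia|split; [nia|ring]].
Qed.

Lemma canon1 a b p q x y u : 0<a -> 0<b -> p*b - q*a = 1 -> 0<=x<b ->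
  u = x*a + y*b -> (H1Z a b u <-> 0 <= y).
Proof.
move=> ha hb hpq hx hu; split; last first.
  by move=> hy; exists x, y; lia.
move=> [x' [y' [hx' [hy' hu']]]].
set t := p*(x'-x) - q*(y-y').
have e1 : (x'-x)*a = (y-y')*b by lia.
have e2 : x' - x = b*t.
  have -> : x' - x = (p*b - q*a)*(x'-x) by rewrite hpq; ring.
  rewrite /t; transitivity (p*b*(x'-x) - q*((x'-x)*a)); first ring.
  rewrite e1; ring.
have e3 : t*a = y - y'.
  apply: (Z.mul_reg_l _ _ b); first lia.
  have -> : b*(t*a) = (b*t)*a by ring.
  rewrite -e2; lia.
have ht : 0 <= t by nia.
nia.
Qed.

Lemma exist1 a b p q u : 0<b -> p*b - q*a = 1 ->
  exists x y, 0<=x<b /\ u = x*a + y*b.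
Proof.
move=> hb hpq.
set m := - u * q.
exists (m mod b), (a*(m/b) + u * p).
have hm := Z.mod_pos_bound m b hb.
have hd := Z.div_mod m b ltac:(lia).
split; first lia.
have Hr : m mod b = - u * q - b*(m/b) by rewrite /m in hd *; lia.
rewrite Hr; transitivity (u*(p*b-q*a)); [rewrite hpq; ring | ring].
Qed.

Lemma sym1 a b p q u : 0<a -> 0<b -> p*b - q*a = 1 ->
  (H1Z a b u <-> ~ H1Z a b (a*b - a - b - u)).
Proof.
move=> ha hb hpq.
have [x [y [hx hu]]] := exist1 a b p q u hb hpq.
have h1 := canon1 a b p q x y u ha hb hpq hx hu.
have h2 := canon1 a b p q (b-1-x) (-1-y) (a*b-a-b-u) ha hb hpq ltac:(lia)
   ltac:(rewrite hu; ring).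
rewrite h1 h2; lia.
Qed.

Lemma canonG a b c d p q w0 u z : 0<d -> p*d - q*c = 1 -> H1Z a b c ->
  0 <= w0 < d -> z = d*u + c*w0 -> (HZ a b c d z <-> H1Z a b u).
Proof.
move=> hd hpq hc hw hz; split; last first.
  by move=> hu; exists u, w0; split=> //; split; lia.
move=> [u' [w' [hu' [hw' hz']]]].
set t := p*(w'-w0) - q*(u-u').
have e1 : d*(u-u') = c*(w'-w0) by nia.
have e2 : w' - w0 = d*t.
  have -> : w' - w0 = (p*d - q*c)*(w'-w0) by rewrite hpq; ring.
  rewrite /t; transitivity (p*d*(w'-w0) - q*(c*(w'-w0))); first ring.
  rewrite -e1; ring.
have e3 : u - u' = c*t.
  apply: (Z.mul_reg_l _ _ d); first lia.
  rewrite e1 e2; ring.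
have ht : 0 <= t by nia.
have -> : u = u' + c*t by lia.
by apply: H1Z_add => //; apply: H1Z_mul.
Qed.

Lemma existG c d p q z : 0<d -> p*d - q*c = 1 ->
  exists w0 u, 0<=w0<d /\ z = d*u + c*w0.
Proof.
move=> hd hpq.
set m := - z * q.
exists (m mod d), (z * p + c*(m/d)).
have hm := Z.mod_pos_bound m d hd.
have hdm := Z.div_mod m d ltac:(lia).
split; first lia.
have Hr : m mod d = - z * q - d*(m/d) by rewrite /m in hdm *; lia.
rewrite Hr; transitivity (z*(p*d-q*c)); [rewrite hpq; ring | ring].
Qed.

Lemma symG a b c d p q p' q' z : 0<a -> 0<b -> 0<d ->
  p*b - q*a = 1 -> p'*d - q'*c = 1 -> H1Z a b c ->
  (HZ a b c d z <-> ~ HZ a b c d (d*(a*b-a-b) + (d-1)*c - z)).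
Proof.
move=> ha hb hd hpq hpq' hc.
have [w0 [u [hw hz]]] := existG c d p' q' z hd hpq'.
rewrite (canonG a b c d p' q' w0 u z) //.
rewrite (canonG a b c d p' q' (d-1-w0) (a*b-a-b-u)) //; last first.
  by rewrite hz; ring.
  lia.
exact: sym1 hpq.
Qed.


Lemma bezN m n : (0 < m)%N -> coprime m n ->
  exists p q : Z, p * Z.of_nat m - q * Z.of_nat n = 1.
Proof.
move=> hm hc; have [x _ hx] := Bezoutl n hm.
move: hc; rewrite /coprime => /eqP hg; rewrite hg in hx.
have [k hk] := dvdnP hx.
exists (Z.of_nat k), (Z.of_nat x); lia.
Qed.

Lemma sg3Z a b c d n : sg3 (d*a)%N (d*b)%N c n <->
  HZ (Z.of_nat a) (Z.of_nat b) (Z.of_nat c) (Z.of_nat d) (Z.of_nat n).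
Proof.
split.
  move=> [x [y [z ->]]].
  exists (Z.of_nat (x*a+y*b)%N), (Z.of_nat z); split; last lia.
  by exists (Z.of_nat x), (Z.of_nat y); lia.
move=> [u [w [[x [y [hx [hy hu]]]] [hw hn]]]].
exists (Z.to_nat x), (Z.to_nat y), (Z.to_nat w).
subst u; nia.
Qed.

Lemma sg2Z a b n : sg2 a b n -> H1Z (Z.of_nat a) (Z.of_nat b) (Z.of_nat n).
Proof. by move=> [x [y ->]]; exists (Z.of_nat x), (Z.of_nat y); lia. Qed.

Section NatFacts.
Variables a b c d : nat.
Hypotheses (ha : (1 < a)%N) (hb : (1 < b)%N) (hab : coprime a b)
  (hc : sg2 a b c) (hd : (0 < d)%N) (hcd : coprime c d).

Definition FF := (d*(a*b-a-b) + (d-1)*c)%N.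

Lemma FFZ : Z.of_nat FF = (Z.of_nat d * (Z.of_nat a * Z.of_nat b - Z.of_nat a - Z.of_nat b)
   + (Z.of_nat d - 1) * Z.of_nat c).
Proof.
rewrite /FF.
have h1 : (a + b <= a * b)%N by nia.
nia.
Qed.

Lemma symZ z : HZ (Z.of_nat a) (Z.of_nat b) (Z.of_nat c) (Z.of_nat d) z <->
  ~ HZ (Z.of_nat a) (Z.of_nat b) (Z.of_nat c) (Z.of_nat d) (Z.of_nat FF - z).
Proof.
have [p [q hpq]] := bezN b a ltac:(lia) ltac:(by rewrite coprime_sym).
have [p' [q' hpq']] := bezN d c hd ltac:(by rewrite coprime_sym).
rewrite FFZ; apply: symG; try lia; eauto.
exact: sg2Z.
Qed.

Lemma HZ_nonneg z : HZ (Z.of_nat a) (Z.of_nat b) (Z.of_nat c) (Z.of_nat d) z -> 0 <= z.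
Proof.
move=> [u [w [hu [hw ->]]]].
have hu0 := H1Z_nonneg (Z.of_nat a) (Z.of_nat b) _ ltac:(lia) ltac:(lia) hu.
apply: Z.add_nonneg_nonneg; apply: Z.mul_nonneg_nonneg; lia.
Qed.

Lemma symN y : (y <= FF)%N -> sg3 (d*a)%N (d*b)%N c y <-> ~ sg3 (d*a)%N (d*b)%N c (FF - y)%N.
Proof.
move=> hy; rewrite !sg3Z symZ.
have -> : Z.of_nat (FF - y) = (Z.of_nat FF - Z.of_nat y) by lia.
by [].
Qed.

Lemma bigN n : (FF < n)%N -> sg3 (d*a)%N (d*b)%N c n.
Proof.
move=> hn; rewrite sg3Z symZ => /HZ_nonneg; lia.
Qed.

End NatFacts.

End Arith.

Set Implicit Arguments. Unset Strict Implicit. Unset Printing Implicit Defensive.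
Section Poly.
Local Open Scope ring_scope.
Variables (k : fieldType) (H : set nat).
Hypotheses (H0 : H 0%N) (Hadd : forall x y, H x -> H y -> H (x + y)%N).

Definition idE (E : nat -> Prop) : set {poly k} := fun p => forall i, p`_i != 0 -> E i.
Definition EI (I : set {poly k}) : nat -> Prop := fun i => I 'X^i.
Definition Ideal (E : nat -> Prop) :=
  (forall x, E x -> H x) /\ (forall x j, E x -> H j -> E (x + j)%N).

Lemma coef_mul_nz (p q : {poly k}) i : (p * q)`_i != 0 ->
  exists j, (j <= i)%N /\ p`_j != 0 /\ q`_(i - j) != 0.
Proof.
move=> hnz; apply: contrapT => hno; move: hnz; rewrite coefM big1 ?eqxx //.
move=> [j hj] _ /=; apply/eqP; apply: contrapT => hne.
apply: hno; exists j; split; first by rewrite -ltnS.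
by split; apply/eqP => h0; apply: hne; rewrite h0 ?mul0r ?mulr0.
Qed.

Lemma inR_X n : H n -> inR H ('X^n : {poly k}).
Proof. by move=> hn i; rewrite coefXn; case: (eqVneq i n) => [-> //| _]; rewrite eqxx. Qed.

Lemma inR_C (c : k) : inR H c%:P.
Proof. by move=> i; rewrite coefC; case: (eqVneq i 0%N) => [-> //| _]; rewrite eqxx. Qed.

Lemma inR_add (p q : {poly k}) : inR H p -> inR H q -> inR H (p + q).
Proof.
move=> hp hq i; rewrite coefD => hi.
have [/eqP hp0|] := boolP (p`_i == 0); last exact: hp.
by apply: hq; rewrite hp0 add0r in hi.
Qed.

Lemma inR_0 : inR H (0 : {poly k}).
Proof. by move=> i; rewrite coef0 eqxx. Qed.

Lemma inR_scale (c : k) (p : {poly k}) : inR H p -> inR H (c *: p).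
Proof. by move=> hp i; rewrite coefZ => hi; apply: hp; apply: contraNneq hi => ->; rewrite mulr0. Qed.

Lemma inR_mul (p q : {poly k}) : inR H p -> inR H q -> inR H (p * q).
Proof.
move=> hp hq i /coef_mul_nz [j [hj [h1 h2]]].
by have := Hadd (hp _ h1) (hq _ h2); rewrite subnKC.
Qed.

Lemma poly_expand (p : {poly k}) : p = \sum_(i < size p) p`_i *: 'X^i.
Proof. by rewrite -poly_def coefK. Qed.

Lemma idE_0 E : idE E 0.
Proof. by move=> i; rewrite coef0 eqxx. Qed.

Lemma idE_add E p q : idE E p -> idE E q -> idE E (p + q).
Proof.
move=> hp hq i; rewrite coefD => hi.
have [/eqP hp0|] := boolP (p`_i == 0); last exact: hp.
by apply: hq; rewrite hp0 add0r in hi.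
Qed.

Lemma idE_graded E : Ideal E -> graded_ideal H (idE E).
Proof.
move=> [EH Eid]; split.
- by move=> p hp i /hp /EH.
- exact: idE_0.
- exact: idE_add.
- move=> r p hr hp i /coef_mul_nz [j [hj [h1 h2]]].
  by have := Eid _ _ (hp _ h2) (hr _ h1); rewrite subnK.
- move=> p hp i j; rewrite coefZ coefXn; case: (eqVneq j i) => [->| _]; last by rewrite mulr0 eqxx.
  by rewrite mulr1; apply: hp.
Qed.

Lemma graded_inR (I : set {poly k}) p : graded_ideal H I -> I p -> inR H p.
Proof. by case=> h _ _ _ _; apply: h. Qed.

Lemma EI_ideal (I : set {poly k}) : graded_ideal H I -> Ideal (EI I).
Proof.
move=> gI; split.
  move=> x hx; have := graded_inR gI hx; apply.
  by rewrite coefXn eqxx oner_eq0.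
move=> x j hx hj; case: gI => _ _ _ hm _.
by rewrite /EI addnC exprD; apply: hm => //; apply: inR_X.
Qed.

Lemma graded_idE (I : set {poly k}) p : graded_ideal H I -> (I p <-> idE (EI I) p).
Proof.
move=> gI; have [hR h0 hadd hmul hhom] := gI; split.
  move=> hp i hi; have := hhom _ hp i.
  move=> /(hmul (p`_i)^-1%:P _ (@inR_C _)).
  by rewrite mul_polyC scalerA mulVf // scale1r.
move=> hp; rewrite (poly_expand p).
apply: (big_ind I) => // i _.
have [/eqP ->|hi] := boolP (p`_i == 0); first by rewrite scale0r.
by rewrite -mul_polyC; apply: hmul; [exact: inR_C | exact: hp].
Qed.


Definition down h x := (x <= h)%N /\ H (h - x)%N.
Definition Eh h x := H x /\ ~ down h x.

Lemma Eh_ideal h : Ideal (Eh h).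
Proof.
split; first by move=> x [].
move=> x j [hx hd] hj; split; first exact: Hadd.
move=> [h1 h2]; apply: hd; split; first lia.
have -> : (h - x = h - (x + j) + j)%N by lia.
exact: Hadd.
Qed.

Lemma down_refl h : down h h.
Proof. by split => //; rewrite subnn. Qed.

Lemma socle_Eh h : H h -> socle_simple H (idE (Eh h)).
Proof.
move=> hh; exists 'X^h; split.
- exact: inR_X.
- move=> /(_ h); rewrite coefXn eqxx oner_eq0 => /(_ isT) [_]; apply; exact: down_refl.
- move=> m [mR m0] i; rewrite coefXnM; case: ltnP => [_|hi hm]; first by rewrite eqxx.
  have hj := mR _ hm.
  have hne : (i - h)%N != 0%N by apply: contraNneq hm => ->; rewrite m0.
  split; first by have := Hadd hh hj; rewrite subnKC.
  by move=> [h1 _]; move: hne; rewrite (_ : (i - h = 0)%N) //; lia.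
- move=> q qR hq; exists q`_h, (q - q`_h *: 'X^h); split; last by rewrite addrC subrK.
  move=> j; rewrite coefB coefZ coefXn.
  case: (eqVneq j h) => [->|hjh]; first by rewrite mulr1 subrr eqxx.
  rewrite mulr0 subr0 => hqj; split; first exact: qR.
  move=> [hjl hjd].
  have := hq ('X^(h - j)) (conj (inR_X hjd) _).
  rewrite coefXn (_ : (0 == h - j)%N = false); last by apply/eqP; lia.
  move=> /(_ erefl) /(_ h); rewrite coefMXn ltnNge leq_subr /=.
  rewrite (_ : (h - (h - j) = j)%N); last lia.
  by move=> /(_ hqj) [_]; apply; apply: down_refl.
Qed.

Lemma exists_max (P : nat -> Prop) B : (exists n, P n) ->
  (forall n, P n -> (n <= B)%N) -> exists m, P m /\ forall n, P n -> (n <= m)%N.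
Proof.
elim: B => [|B IH] [n hn] hB.
  exists n; split => // n' /hB; have := hB _ hn; lia.
have [hB1|hB1] := pselect (P B.+1).
  by exists B.+1; split.
apply: IH; first by exists n.
move=> n' hn'; have := hB _ hn'; rewrite leq_eqVlt => /orP [/eqP e|]; last by [].
by rewrite e in hn'.
Qed.


Variable F : nat.
Hypothesis Hbig : forall n, (F < n)%N -> H n.

Lemma socle_inv (I : set {poly k}) : graded_ideal H I -> ~ zero_ideal I ->
  socle_simple H I -> exists h, H h /\ forall x, EI I x <-> Eh h x.
Proof.
move=> gI nz [s [sR sI ssoc sspan]].
have [EH Eid] := EI_ideal gI.
have gE : forall p, I p <-> idE (EI I) p by move=> p; apply: graded_idE.
have [e he] : exists e, EI I e.
  apply: contrapT => hno; apply: nz => p hp; apply/eqP; apply: contrapT => hp0.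
  apply: hno; exists (size p).-1; apply: (proj1 (gE p) hp).
  by rewrite -lead_coefE lead_coef_eq0; apply/negP.
have [h [hsh hEh]] : exists h, s`_h != 0 /\ ~ EI I h.
  apply: contrapT => hno; apply: sI; apply/gE => i hi.
  by apply: contrapT => hE; apply: hno; exists i.
have hH : H h := sR _ hsh.
have hdown : forall x, H x -> ~ EI I x -> down h x.
  move=> x hx hEx.
  pose P y := [/\ H y, ~ EI I y, (x <= y)%N & H (y - x)%N].
  have [y [[hy1 hy2 hy3 hy4] ymax]] : exists y, P y /\ forall n, P n -> (n <= y)%N.
    apply: (@exists_max P (e + F)).
      by exists x; split => //; rewrite subnn.
    move=> n [hn1 hn2 _ _]; rewrite leqNgt; apply/negP => hlt; apply: hn2.
    have -> : n = (e + (n - e))%N by lia.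
    by apply: Eid => //; apply: Hbig; lia.
  have ysoc : forall m, inM H m -> I ('X^y * m).
    move=> m [mR m0]; apply/gE => i; rewrite coefXnM; case: ltnP => [_|hi hm].
      by rewrite eqxx.
    have hj := mR _ hm.
    have hne : (i - y)%N != 0%N by apply: contraNneq hm => ->; rewrite m0.
    apply: contrapT => hEi.
    have : P i.
      split => //; first by have := Hadd hy1 hj; rewrite subnKC.
        lia.
      have -> : (i - x = (y - x) + (i - y))%N by lia.
      exact: Hadd.
    move=> /ymax; lia.
  have [l [i0 [hi0 hq]]] := sspan _ (inR_X hy1) ysoc.
  have hi0E : forall j, ~ EI I j -> i0`_j = 0.
    move=> j hj; apply/eqP; apply: contrapT => hnz; apply: hj.
    by have := (proj1 (gE i0) hi0) j; apply; apply/negP.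
  have c1 : 1 = l * s`_y.
    have := congr1 (fun p : {poly k} => p`_y) hq.
    by rewrite /= coefXn eqxx coefD coefZ hi0E // addr0.
  have hyh : y = h.
    apply: contrapT => hne.
    have := congr1 (fun p : {poly k} => p`_h) hq.
    rewrite /= coefXn (_ : (h == y) = false); last by apply/eqP => e'; apply: hne.
    rewrite coefD coefZ hi0E // addr0 => /esym /eqP.
    rewrite mulf_eq0 (negbTE hsh) orbF => /eqP hl.
    by move: c1; rewrite hl mul0r => /eqP; rewrite oner_eq0.
  by rewrite -hyh; split.
exists h; split => // x; split.
  move=> hx; split; first exact: EH.
  move=> [hxh hd]; apply: hEh.
  by have := Eid _ _ hx hd; rewrite subnKC.
move=> [hx hnd]; apply: contrapT => hEx; apply: hnd; exact: hdown.
Qed.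


Hypothesis Hsym : forall y, (y <= F)%N -> H y <-> ~ H (F - y)%N.

Lemma F_notin : ~ H F.
Proof. by have := Hsym (leq0n F); rewrite subn0 => [[h _]]; apply: h. Qed.

Lemma Eh_principal h : H h -> (F < h)%N -> H (h - F)%N ->
  forall x, Eh h x <-> ((h - F) <= x)%N /\ H (x - (h - F))%N.
Proof.
move=> hh hF he x; split.
  move=> [hx hnd]; apply: contrapT => hno; apply: hnd.
  have [hlt|hge] := ltnP x (h - F).
    split; first lia.
    by apply: Hbig; lia.
  have hn : ~ H (x - (h - F))%N by move=> hH; apply: hno.
  have hle : (x - (h - F) <= F)%N.
    by rewrite leqNgt; apply/negP => hlt; apply: hn; apply: Hbig.
  have := Hsym hle; rewrite -/(not _) => [[_ hr]].
  have hr' : H (F - (x - (h - F)))%N by apply: contrapT => hnot; apply: hn; apply: hr.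
  split; first lia.
  by rewrite (_ : (h - x = F - (x - (h - F)))%N) //; lia.
move=> [hle hx]; split.
  by rewrite (_ : x = (h - F) + (x - (h - F)))%N; [apply: Hadd|lia].
move=> [hxh hd].
have hle' : (x - (h - F) <= F)%N by lia.
have := (proj1 (Hsym hle')) hx; apply.
by rewrite (_ : (F - (x - (h - F)) = h - x)%N) //; lia.
Qed.

Lemma principal_Eh h e : H h -> (forall x, Eh h x <-> (e <= x)%N /\ H (x - e)%N) ->
  (F < h)%N /\ H (h - F)%N.
Proof.
move=> hh hp.
have [heH _] : Eh h e by apply/hp; rewrite subnn.
have e0 : (0 < e)%N.
  rewrite lt0n; apply/negP => /eqP e0; subst e.
  have [_ hd] : Eh h 0%N by apply/hp; rewrite subn0.
  by apply: hd; split; rewrite ?subn0.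
have hFe : H (F + e)%N by apply: Hbig; lia.
have [hle hd] : down h (F + e)%N.
  apply: contrapT => hnd.
  have /hp [_] : Eh h (F + e)%N by split.
  by rewrite addnK => /F_notin.
have hhe : (h = F + e)%N.
  apply/eqP; rewrite eqn_leq hle andbT leqNgt; apply/negP => hlt.
  have nEhh : ~ Eh h h by move=> [_]; apply; apply: down_refl.
  by apply: nEhh; apply/hp; split; [lia | apply: Hbig; lia].
split; first lia.
by rewrite hhe addKn.
Qed.

Definition Rep (s : seq {poly k}) (p : {poly k}) :=
  exists r : 'I_(size s) -> {poly k}, (forall j, inR H (r j)) /\
     p = \sum_(j < size s) r j * s`_j.

Lemma Rep_0 s : Rep s 0.
Proof.
exists (fun _ => 0); split; first by move=> j; exact: inR_0.
by rewrite big1 // => j _; rewrite mul0r.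
Qed.

Lemma Rep_add s p q : Rep s p -> Rep s q -> Rep s (p + q).
Proof.
move=> [r1 [h1 ->]] [r2 [h2 ->]]; exists (fun j => r1 j + r2 j); split.
  by move=> j; apply: inR_add.
by rewrite -big_split /=; apply: eq_bigr => j _; rewrite mulrDl.
Qed.

Lemma Rep_term s (j0 : 'I_(size s)) r : inR H r -> Rep s (r * s`_j0).
Proof.
move=> hr; exists (fun j => if j == j0 then r else 0); split.
  by move=> j; case: eqP => _ //; exact: inR_0.
rewrite (bigD1 j0) //= eqxx big1 ?addr0 // => j /negbTE ->; by rewrite mul0r.
Qed.

Lemma gen_lemma E (s : seq {poly k}) : Ideal E ->
  (forall j : 'I_(size s), idE E s`_j) ->
  (forall i, E i -> exists (j : 'I_(size s)) r, inR H r /\ 'X^i = r * s`_j) ->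
  generated_by H (idE E) s.
Proof.
move=> hE hs hX p; split.
  move=> hp; rewrite (poly_expand p); apply: (big_ind (Rep s)).
  - exact: Rep_0.
  - exact: Rep_add.
  move=> i _; have [/eqP ->|hi] := boolP (p`_i == 0); first by rewrite scale0r; exact: Rep_0.
  have [j [r [hr ->]]] := hX _ (hp _ hi).
  by rewrite scalerAl; apply: Rep_term; apply: inR_scale.
move=> [r [hr ->]].
have [_ h0 hadd hmul _] := idE_graded hE.
apply: (big_ind (idE E)) => // j _; exact: hmul.
Qed.

Definition Pe e x := (e <= x)%N /\ H (x - e)%N.

Lemma Pe_ideal e : H e -> Ideal (Pe e).
Proof.
move=> he; split.
  by move=> x [hx1 hx2]; rewrite (_ : x = e + (x - e))%N; [apply: Hadd|lia].
move=> x j [hx1 hx2] hj; split; first lia.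
by rewrite (_ : (x + j - e = (x - e) + j)%N); [apply: Hadd|lia].
Qed.

Lemma gen_principal e : H e -> generated_by H (idE (Pe e)) [:: 'X^e].
Proof.
move=> he; apply: gen_lemma; first exact: Pe_ideal.
  move=> j; rewrite (_ : [:: 'X^e]`_j = 'X^e); last by case: j => [[]].
  by move=> i; rewrite coefXn; case: (eqVneq i e) => [->|]; rewrite ?eqxx // => _; split; rewrite ?subnn.
move=> i [hi1 hi2]; exists ord0, 'X^(i - e); split; first exact: inR_X.
by rewrite /= -exprD subnK.
Qed.

Lemma Eh_gen h : H h -> exists s, generated_by H (idE (Eh h)) s.
Proof.
move=> hh.
pose N := (h + F + F + 2)%N.
pose G := [seq i <- iota 0 N | `[< Eh h i >]].
have hG : forall x, Eh h x -> exists g, g \in G /\ (g <= x)%N /\ H (x - g)%N.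
  elim/ltn_ind => x IH hx.
  have [hlt|hge] := ltnP x N.
    exists x; split; last by rewrite subnn.
    by rewrite mem_filter mem_iota /= add0n hlt andbT; apply/asboolP.
  rewrite /N in hge.
  have hy : Eh h (x - (F + 1))%N.
    split; first by apply: Hbig; lia.
    by move=> [hle _]; lia.
  have [g [hg1 [hg2 hg3]]] := IH (x - (F + 1))%N ltac:(lia) hy.
  exists g; split => //; split; first lia.
  rewrite (_ : (x - g = (x - (F + 1) - g) + (F + 1))%N); last lia.
  by apply: Hadd => //; apply: Hbig; lia.
have hGE : forall g, g \in G -> Eh h g.
  by move=> g; rewrite mem_filter => /andP [/asboolP].
exists [seq 'X^i | i <- G]; apply: gen_lemma; first exact: Eh_ideal.
  move=> j; rewrite (nth_map 0%N); last by rewrite -(size_map (fun i => 'X^i : {poly k})).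
  move=> i; rewrite coefXn; case: (eqVneq i (nth 0%N G j)) => [-> _|_]; last by rewrite eqxx.
  by apply: hGE; apply: mem_nth; rewrite -(size_map (fun i => 'X^i : {poly k})).
move=> i hi; have [g [hg1 [hg2 hg3]]] := hG _ hi.
have hj : (index g G < size [seq ('X^i : {poly k}) | i <- G])%N by rewrite size_map index_mem.
exists (Ordinal hj), 'X^(i - g); split; first exact: inR_X.
rewrite /= (nth_map 0%N) ?index_mem // nth_index // -exprD subnK //.
Qed.

Lemma exists_min (P : nat -> Prop) : (exists n, P n) ->
  exists m, P m /\ forall n, P n -> (m <= n)%N.
Proof.
move=> [n hn]; elim/ltn_ind: n hn => n IH hn.
have [[m [hm1 hm2]]|hno] := pselect (exists m, (m < n)%N /\ P m).
  exact: IH hm2.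
exists n; split => // m hm; rewrite leqNgt; apply/negP => hlt; apply: hno.
by exists m.
Qed.

Lemma mu_exists (I : set {poly k}) : (exists s, generated_by H I s) ->
  exists n, mu_is H I n.
Proof.
move=> [s hs].
have [n [[s' [hs'1 hs'2]] hmin]] :=
  @exists_min (fun n => exists s, size s = n /\ generated_by H I s) (ex_intro _ (size s) (ex_intro _ s (conj erefl hs))).
exists n; split; first by exists s'.
by move=> t ht; apply: hmin; exists t.
Qed.

Definition minE (E : nat -> Prop) e :=
  E e /\ forall j, H j -> (0 < j)%N -> (j <= e)%N -> ~ E (e - j)%N.

Lemma coef_min E e r p : minE E e -> inR H r -> idE E p ->
  (r * p)`_e = r`_0 * p`_e.
Proof.
move=> [he hmin] hr hp; rewrite coefM big_ord_recl /= subn0 big1 ?addr0 //.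
move=> i _; apply/eqP; apply: contrapT => hnz.
have h1 : r`_i.+1 != 0 by apply/eqP => h0; apply: hnz; rewrite h0 mul0r.
have h2 : p`_(e - i.+1) != 0 by apply/eqP => h0; apply: hnz; rewrite h0 mulr0.
have := hmin _ (hr _ h1) (ltn0Sn i) _ (hp _ h2); apply.
by have := ltn_ord i.
Qed.

Lemma gen_ge2 E e0 : Ideal E -> E e0 ->
  ~ (exists e, forall x, E x <-> (e <= x)%N /\ H (x - e)%N) ->
  forall s, generated_by H (idE E) s -> (2 <= size s)%N.
Proof.
move=> [EH Eid] he0 hnp.
have [e1 [he1 e1min]] := @exists_min E (ex_intro _ e0 he0).
have m1 : minE E e1.
  by split => // j hj hj0 hje /e1min; lia.
have [x [hx hxn]] : exists x, E x /\ ~ ((e1 <= x)%N /\ H (x - e1)%N).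
  apply: contrapT => hno; apply: hnp; exists e1 => x; split.
    by move=> hx; apply: contrapT => hn; apply: hno; exists x.
  by move=> [h1 h2]; rewrite (_ : x = e1 + (x - e1))%N; [apply: Eid|lia].
have hxx : H (x - x)%N by rewrite subnn.
have [e2 [[he2 [he2x he2H]] e2min]] := @exists_min (fun y => E y /\ (y <= x)%N /\ H (x - y)%N)
   (ex_intro _ x (conj hx (conj (leqnn x) hxx))).
have m2 : minE E e2.
  split => // j hj hj0 hje he.
  have := e2min (e2 - j)%N; rewrite -/(not _) => hh; suff : (e2 <= e2 - j)%N by lia.
  apply: hh; split => //; split; first lia.
  by rewrite (_ : (x - (e2 - j) = (x - e2) + j)%N); [apply: Hadd|lia].
have ne12 : e1 <> e2 by move=> e12; apply: hxn; rewrite e12.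
have hXe : forall e, E e -> idE E 'X^e.
  by move=> e he i; rewrite coefXn; case: (eqVneq i e) => [-> //|_]; rewrite eqxx.
move=> s hs.
have hRep : forall p, idE E p -> Rep s p by move=> p /(hs p).
case: s hs hRep => [|s0 [|s1 s']] hs hRep //.
  have [r [_ /= he]] := hRep _ (hXe _ he1).
  move: he; rewrite big_ord0 => /(congr1 (fun p : {poly k} => p`_e1)).
  by rewrite coefXn eqxx coef0 => /eqP; rewrite oner_eq0.
have hs0 : idE E s0.
  apply/(hs s0); have := @Rep_term [:: s0] ord0 1 (@inR_C 1).
  by rewrite mul1r.
have key : forall e e', minE E e -> minE E e' -> e <> e' -> s0`_e' = 0.
  move=> e e' me me' nee.
  have [r [hr /= he]] := hRep _ (hXe _ (proj1 me)).
  move: he; rewrite big_ord1 /= => he.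
  have c1 := congr1 (fun p : {poly k} => p`_e) he.
  have c2 := congr1 (fun p : {poly k} => p`_e') he.
  move: c1 c2; rewrite /= !(coef_min _ (hr _) hs0) // coefXn eqxx coefXn.
  rewrite (_ : (e' == e) = false); last by apply/eqP => ee; apply: nee.
  move=> c1 /esym /eqP; rewrite mulf_eq0 => /orP [/eqP r0|/eqP //].
  by move: c1; rewrite r0 mul0r => /eqP; rewrite oner_eq0.
have z2 := key _ _ m1 m2 ne12.
have [r [hr /= he]] := hRep _ (hXe _ he2).
move: he; rewrite big_ord1 /= => /(congr1 (fun p : {poly k} => p`_e2)).
rewrite /= (coef_min _ (hr _) hs0) // coefXn eqxx z2 mulr0 => /eqP.
by rewrite oner_eq0.
Qed.


Definition TT h := H h /\ ~ ((F < h)%N /\ H (h - F)%N).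

Lemma Rep_nil p : Rep [::] p <-> p = 0.
Proof.
split; first by move=> [r [_ ->]]; rewrite big_ord0.
by move=> ->; apply: Rep_0.
Qed.

Lemma idE_ext E1 E2 : (forall x, E1 x <-> E2 x) -> idE E1 = idE E2.
Proof.
move=> hE; apply: funext => p; apply: propext.
by split => hp i hi; [apply/(hE i); apply: hp | apply/(hE i); apply: hp].
Qed.

Lemma EhX h : H h -> Eh h (h + F + 1)%N.
Proof. by move=> hh; split; [apply: Hbig; lia | move=> [hle _]; lia]. Qed.

Lemma XR_char (I : set {poly k}) : XR H I <-> exists h, TT h /\ I = idE (Eh h).
Proof.
split.
  move=> [gI [gq [n [[_ mu2] hn]]]].
  case: gq => [[zI _]|[nz soc]].
    have : generated_by H I [::].
      move=> p; rewrite (_ : (exists r, _) <-> Rep [::] p) //.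
      rewrite Rep_nil; split; first exact: zI.
      by move=> ->; case: gI.
    by move=> /mu2 /=; lia.
  have [h [hh hE]] := socle_inv gI nz soc.
  have eI : I = idE (Eh h).
    rewrite -(idE_ext hE); apply: funext => p; apply: propext.
    exact: graded_idE.
  exists h; split => //; split => //; move=> [hF hhF].
  have e2 : I = idE (Pe (h - F)%N) by rewrite eI; apply: idE_ext; apply: Eh_principal.
  have := mu2 [:: 'X^(h - F)]; rewrite e2 => /(_ (gen_principal hhF)) /=; lia.
move=> [h [[hh hT] ->]]; split; first exact: idE_graded (Eh_ideal h).
split.
  right; split; last exact: socle_Eh.
  move=> z; have := z 'X^(h + F + 1)%N; rewrite -/(not _) => hz.
  have : ('X^(h + F + 1) : {poly k}) = 0.
    apply: hz => i; rewrite coefXn; case: (eqVneq i (h + F + 1)%N) => [-> _|_]; last by rewrite eqxx.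
    exact: EhX.
  by move=> /(congr1 (fun p : {poly k} => p`_(h + F + 1)%N)); rewrite coefXn eqxx coef0 => /eqP; rewrite oner_eq0.
have [n hmu] := mu_exists (Eh_gen hh).
exists n; split => //.
have [[s [<- hs]] _] := hmu.
apply: (gen_ge2 (Eh_ideal h) (EhX hh)) => //.
by move=> [e he]; apply: hT; apply: (principal_Eh hh he).
Qed.

Lemma idE_Eh_inj h1 h2 : H h1 -> H h2 -> idE (Eh h1) = idE (Eh h2) -> h1 = h2.
Proof.
have side : forall h1 h2, H h1 -> idE (Eh h1) = idE (Eh h2) -> (h1 <= h2)%N.
  move=> g1 g2 hg1 e.
  have hn : ~ idE (Eh g1) 'X^g1.
    move=> /(_ g1); rewrite coefXn eqxx oner_eq0 => /(_ isT) [_]; apply; exact: down_refl.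
  rewrite e in hn; apply: contrapT => hlt; apply: hn => i.
  rewrite coefXn; case: (eqVneq i g1) => [-> _|_]; last by rewrite eqxx.
  by split => // [[hle _]]; apply: hlt.
move=> hh1 hh2 e; apply/eqP; rewrite eqn_leq (side _ _ hh1 e) (side _ _ hh2 (esym e)).
by [].
Qed.

Definition phi n := if `[< H n >] then n else (F + n)%N.

Lemma phi_T n : (n < F.+1)%N -> TT (phi n).
Proof.
rewrite /phi => hn; case: (asboolP (H n)) => hH.
  by split => // [[hF _]]; lia.
have n0 : (0 < n)%N by case: n hn hH => // _ []; exact: H0.
split; first by apply: Hbig; lia.
by move=> [_]; rewrite (_ : (F + n - F = n)%N) //; lia.
Qed.

Lemma T_phi h : TT h -> exists2 n, (n < F.+1)%N & phi n = h.
Proof.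
move=> [hh hT]; have [hle|hgt] := leqP h F.
  by exists h; rewrite ?ltnS // /phi; case: asboolP.
have hn : ~ H (h - F)%N by move=> hH; apply: hT.
exists (h - F)%N.
  by rewrite ltnS leqNgt; apply/negP => hlt; apply: hn; apply: Hbig.
by rewrite /phi; case: asboolP => // _; lia.
Qed.

Lemma phi_inj n m : (n < F.+1)%N -> (m < F.+1)%N -> phi n = phi m -> n = m.
Proof.
rewrite /phi => hn hm; case: asboolP => hHn; case: asboolP => hHm e; try lia.
  have : m <> 0%N by move=> m0; apply: hHm; rewrite m0.
  lia.
have : n <> 0%N by move=> n0; apply: hHn; rewrite n0.
lia.
Qed.

Lemma XR_card : @XR k H #= `I_(F.+1).
Proof.
have -> : @XR k H = (fun n => idE (Eh (phi n))) @` `I_(F.+1).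
  apply: funext => I; apply: propext; rewrite XR_char; split.
    move=> [h [hT ->]]; have [n hn <-] := T_phi hT.
    by exists n.
  by move=> [n hn <-]; exists (phi n); split => //; apply: phi_T.
apply: inj_card_eq => n m; rewrite !inE /= => hn hm e.
apply: phi_inj => //; apply: idE_Eh_inj => //.
  by case: (phi_T hn).
by case: (phi_T hm).
Qed.


Lemma principal_idE e : H e -> principal H ('X^e : {poly k}) = idE (Pe e).
Proof.
move=> he; apply: funext => p; apply: propext; rewrite (gen_principal he p).
split.
  move=> [r [hr ->]]; exists (fun _ => r); split => //.
  by rewrite big_ord1.
move=> [r [hr ->]]; exists (r ord0); split => //.
by rewrite big_ord1.
Qed.

Lemma main_generic : (@XR k H #= `I_(F.+1)) /\
  (forall e, H e -> (0 < e)%N -> socle_simple H (principal H ('X^e : {poly k}))).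
Proof.
split; first exact: XR_card.
move=> e he e0.
have hFe : H (F + e)%N by apply: Hbig; lia.
rewrite principal_idE // (_ : idE (Pe e) = idE (Eh (F + e)%N)).
  exact: socle_Eh.
apply: idE_ext => x; rewrite (Eh_principal hFe) ?addKn //; last lia.
Qed.

End Poly.

Unset Implicit Arguments.

Theorem corollary4p4 (a b c d : nat) (k : fieldType) :
  (0 < a)%N -> (0 < b)%N -> coprime a b -> min_gen2 a b ->
  sg2 a b c -> (0 < c)%N -> c <> a -> c <> b ->
  (1 < d)%N -> coprime c d ->
  let H := sg3 (d * a) (d * b) c in
  @gorenstein_quot k H (fun p => p = 0%R) /\
  (@XR k H #= `I_(d * (a * b - a - b) + (d - 1) * c + 1)%N).
Proof.
move=> ha hb hab [hm1 hm2] hc c0 hca hcb hd hcd H.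
have ha1 : (1 < a)%N.
  rewrite ltn_neqAle ha andbT eq_sym; apply/eqP => a1; apply: hm2.
  by exists b; rewrite a1 muln1.
have hb1 : (1 < b)%N.
  rewrite ltn_neqAle hb andbT eq_sym; apply/eqP => b1; apply: hm1.
  by exists a; rewrite b1 muln1.
have hd0 : (0 < d)%N by lia.
have H0 : H 0%N by exists 0%N, 0%N, 0%N.
have Hadd : forall x y, H x -> H y -> H (x + y)%N.
  move=> x y [x1 [x2 [x3 ->]]] [y1 [y2 [y3 ->]]].
  exists (x1 + y1)%N, (x2 + y2)%N, (x3 + y3)%N; lia.
have [hcard hsoc] := @main_generic k H H0 Hadd (FF a b c d)
  (bigN a b c d ha1 hb1 hab hc hd0 hcd) (symN a b c d ha1 hb1 hab hc hd0 hcd).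
split.
  left; split; first by move=> p.
  exists (d * a)%N; split; first by rewrite muln_gt0 hd0.
  split; first by exists 1%N, 0%N, 0%N; lia.
  apply: hsoc; first by exists 1%N, 0%N, 0%N; lia.
  by rewrite muln_gt0 hd0.
by rewrite addn1.
Qed.
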